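(* Let $A$ be a finite alphabet and let $w\in A^{+}$ with $|w|\le 2$. Then for every integer $k\ge0$ the language $\mathrm{Count}(w,k)$ has generalised star-height $0$, and for all integers $n\ge2$ and $0\le k<n$ the language $\mathrm{ModCount}(w,k,n)$ has generalised star-height at most $1$.
   Context: Generalised regular expressions over $A$: $\emptyset$, $\varepsilon$ and each letter are expressions; if $E,F$ are expressions so are $E\cup F$, $EF$, $E^{\ast}$, $E^{c}$ (complement in $A^{\ast}$). Star-height: $h(\emptyset)=h(\varepsilon)=h(a)=0$, $h(E\cup F)=h(EF)=\max\{h(E),h(F)\}$, $h(E^{\ast})=h(E)+1$, $h(E^{c})=h(E)$; the star-height of a language is the minimum of $h(E)$ over expressions $E$ representing it. For $w\in A^{+}$ and $v\in A^{\ast}$, $|v|_{w}$ is the number of factorisations $v=xwy$ with $x,y\in A^{\ast}$ (overlapping occurrences counted separately). $\mathrm{Count}(w,k)=\{v\in A^{\ast}:|v|_{w}=k\}$ for $k\ge0$; $\mathrm{ModCount}(w,k,n)=\{v\in A^{\ast}:|v|_{w}\equiv k\pmod n\}$ for $n\ge2$, $0\le k<n$. *)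

(* Defs.v *)
From mathcomp Require Import all_boot.
Set Implicit Arguments. Unset Strict Implicit. Unset Printing Implicit Defensive.

Inductive gre (A : Type) : Type :=
| GEmpty : gre A
| GEps : gre A
| GLet : A -> gre A
| GUnion : gre A -> gre A -> gre A
| GConc : gre A -> gre A -> gre A
| GStar : gre A -> gre A
| GCompl : gre A -> gre A.
Arguments GEmpty {A}. Arguments GEps {A}.

Fixpoint lang (A : Type) (E : gre A) : seq A -> Prop :=
  match E with
  | GEmpty => fun _ => False
  | GEps => fun v => v = [::]
  | GLet a => fun v => v = [:: a]
  | GUnion E F => fun v => lang E v \/ lang F v
  | GConc E F => fun v => exists x y, v = x ++ y /\ lang E x /\ lang F y
  | GStar E => fun v => exists s : seq (seq A),
                 v = flatten s /\ foldr (fun u P => lang E u /\ P) True s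
  | GCompl E => fun v => ~ lang E v
  end.

Fixpoint height (A : Type) (E : gre A) : nat :=
  match E with
  | GEmpty | GEps | GLet _ => 0
  | GUnion E F | GConc E F => maxn (height E) (height F)
  | GStar E => (height E).+1
  | GCompl E => height E
  end.

Definition represents (A : Type) (E : gre A) (L : seq A -> Prop) :=
  forall v, lang E v <-> L v.

(* The star-height of L is at most h iff some expression of height <= h represents L
   (the star-height is a minimum over such expressions). *)
Definition star_height_le (A : Type) (L : seq A -> Prop) (h : nat) :=
  exists E : gre A, represents E L /\ height E <= h.

(* Star-height exactly 0 (equivalent to <= 0 since it is a minimum of naturals). *)
Definition star_height_eq0 (A : Type) (L : seq A -> Prop) :=
  exists E : gre A, represents E L /\ height E = 0.

(* |v|_w : number of factorisations v = x w y, indexed by the length i = |x|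
   (0 <= i <= |v|); the factorisation exists iff the factor of v of length |w|
   starting at position i equals w. *)
Definition occ (A : eqType) (w v : seq A) : nat :=
  count (fun i => take (size w) (drop i v) == w) (iota 0 (size v).+1).

Definition Count (A : eqType) (w : seq A) (k : nat) : seq A -> Prop :=
  fun v => occ w v = k.

Definition ModCount (A : eqType) (w : seq A) (k n : nat) : seq A -> Prop :=
  fun v => occ w v = k %[mod n].

(* Main.v *)
Require Import Defs.
From mathcomp Require Import all_boot.
From mathcomp Require Import zify.
From Stdlib Require Import Classical.
Set Implicit Arguments. Unset Strict Implicit. Unset Printing Implicit Defensive.

Definition All {A : Type} : gre A := GCompl GEmpty.
Definition Inter {A : Type} (E F : gre A) : gre A := GCompl (GUnion (GCompl E) (GCompl F)).
Fixpoint word {A : Type} (s : seq A) : gre A :=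
  match s with [::] => GEps | a :: s' => GConc (GLet a) (word s') end.
Fixpoint cpowE {A : Type} (X : gre A) (t : nat) (F : gre A) : gre A :=
  match t with 0 => F | t'.+1 => GConc X (cpowE X t' F) end.
Definition powE {A : Type} (X : gre A) n := cpowE X n GEps.

Lemma lang_Inter A (E F : gre A) v : lang (Inter E F) v <-> lang E v /\ lang F v.
Proof.
simpl; split.
- move=> H; split; apply: NNPP => H'; apply: H; by [left|right].
- by move=> [HE HF] [].
Qed.

Lemma lang_word A (s : seq A) v : lang (word s) v <-> v = s.
Proof.
elim: s v => [|a s IH] v /=; first by [].
split.
- by move=> [x [y [-> [-> /IH ->]]]].
- move=> ->; exists [:: a], s; split=> //; split=> //; exact/IH.
Qed.

Lemma lang_pre A (s : seq A) v : lang (GConc (word s) All) v <-> take (size s) v = s.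
Proof.
split.
- move=> [x [y [-> [/lang_word -> _]]]]. by rewrite take_size_cat.
- move=> H; exists s, (drop (size s) v); split.
    by rewrite -{1}(cat_take_drop (size s) v) H.
  split; [exact/lang_word | by move=> []].
Qed.

Lemma lang_endc A (c : A) v : lang (GConc All (GLet c)) v <-> exists x, v = x ++ [:: c].
Proof.
split.
- by move=> [x [y [-> [_ ->]]]]; exists x.
- move=> [x ->]; exists x, [:: c]; split=> //; split=> //; by move=> [].
Qed.

Lemma conc_congr A (E E' F F' : gre A) :
  (forall v, lang E v <-> lang E' v) -> (forall v, lang F v <-> lang F' v) ->
  forall v, lang (GConc E F) v <-> lang (GConc E' F') v.
Proof.
move=> HE HF v /=; split=> [[x [y [-> [/HE ? /HF ?]]]]|[x [y [-> [/HE ? /HF ?]]]]];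
  by exists x, y.
Qed.

Lemma concA A (E F G : gre A) v :
  lang (GConc (GConc E F) G) v <-> lang (GConc E (GConc F G)) v.
Proof.
split.
- move=> [xy [z [-> [[x [y [-> [? ?]]]] ?]]]].
  exists x, (y ++ z); split; first by rewrite catA.
  split=> //. by exists y, z.
- move=> [x [yz [-> [? [y [z [-> [? ?]]]]]]]].
  exists (x ++ y), z; split; first by rewrite catA.
  split=> //. by exists x, y.
Qed.

Lemma epsConc A (G : gre A) v : lang (GConc GEps G) v <-> lang G v.
Proof.
split.
- by move=> [x [y [-> [-> ?]]]].
- move=> H; by exists [::], v.
Qed.

Lemma cpow_congr A (X F F' : gre A) t :
  (forall v, lang F v <-> lang F' v) -> forall v, lang (cpowE X t F) v <-> lang (cpowE X t F') v.
Proof.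
move=> H; elim: t => [|t IH] v; first exact: H.
apply: conc_congr => // u; exact: iff_refl.
Qed.

Lemma cpow_conc A (X F G : gre A) t v :
  lang (GConc (cpowE X t F) G) v <-> lang (cpowE X t (GConc F G)) v.
Proof.
elim: t v => [|t IH] v; first exact: iff_refl.
apply: iff_trans (concA _ _ _ _) _.
apply: conc_congr => // u; exact: iff_refl.
Qed.

Lemma cpow_add A (X F : gre A) a b : cpowE X a (cpowE X b F) = cpowE X (a + b) F.
Proof. elim: a => [|a IH] //=. by rewrite IH. Qed.

Lemma star_conc A (P Q : gre A) v :
  lang (GConc (GStar P) Q) v <-> exists m, lang (cpowE P m Q) v.
Proof.
split.
- move=> [x [z [-> [[s [-> Hs]] Hz]]]].
  elim: s Hs => [|u s IH] /= Hs.
  + by exists 0.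
  + case: Hs => Hu /IH [m Hm]. exists m.+1; exists u, (flatten s ++ z).
    split; first by rewrite catA. by split.
- move=> [m]; elim: m v => [|m IH] v /=.
  + move=> Hv; exists [::], v; split=> //; split=> //; by exists [::].
  + move=> [u [y [-> [Hu /IH [x [z [-> [[s [-> Hs]] Hz]]]]]]]].
    exists (u ++ flatten s), z; split; first by rewrite catA.
    split=> //; by exists (u :: s).
Qed.

Lemma cpow_exists A (X F : gre A) (G : nat -> gre A) r :
  (forall v, lang F v <-> exists m, lang (G m) v) ->
  forall v, lang (cpowE X r F) v <-> exists m, lang (cpowE X r (G m)) v.
Proof.
move=> H; elim: r => [|r IH] v; first exact: H.
split.
- move=> [x [y [-> [Hx /IH [m Hm]]]]]; exists m, x, y; split=> //.
- move=> [m [x [y [-> [Hx Hm]]]]]; exists x, y; split=> //; split=> //; apply/IH; by exists m.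
Qed.

Lemma pow_lemma A (X Z : gre A) n m v :
  lang (cpowE (powE X n) m Z) v <-> lang (cpowE X (n * m) Z) v.
Proof.
elim: m v => [|m IH] v; first by rewrite muln0; exact: iff_refl.
rewrite mulnS -cpow_add.
apply: (iff_trans (conc_congr (fun u => iff_refl (lang (powE X n) u)) IH v)).
rewrite /powE. apply: iff_trans (cpow_conc _ _ _ _ _) _.
apply: cpow_congr => u; exact: epsConc.
Qed.

Lemma count_iotaS (P : pred nat) m n : count P (iota m.+1 n) = count (fun i => P i.+1) (iota m n).
Proof. elim: n m => //= n IH m. by rewrite IH. Qed.

Lemma count_cons' (T : Type) (P : pred T) x s : count P (x :: s) = P x + count P s.
Proof. by []. Qed.

Lemma occ_cons (A : eqType) (w : seq A) a v :
  occ w (a :: v) = (take (size w) (a :: v) == w) + occ w v.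
Proof.
rewrite /occ.
change (iota 0 (size (a::v)).+1) with (0 :: iota 1 (size v).+1).
by rewrite count_cons' count_iotaS drop0.
Qed.

Lemma occ_nil (A : eqType) (c : A) w' : occ (c :: w') [::] = 0.
Proof. by []. Qed.

Lemma ge_split (A : eqType) (c : A) w' t v : t < occ (c :: w') v ->
  exists x y, v = x ++ c :: y /\ take (size w') y = w' /\ t <= occ (c :: w') y.
Proof.
elim: v => [|a v IH]; first by rewrite occ_nil.
rewrite occ_cons; case: (take (size (c :: w')) (a :: v) =P c :: w') => [H|H] Ht.
- move: H => /= [Ea Hv]. subst a. by exists [::], v.
- have [x [y [-> [Hy Hty]]]] := IH Ht. by exists (a :: x), y.
Qed.


Lemma occ_ge_cat (A : eqType) (c : A) w' x y : take (size w') y = w' ->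
  (occ (c :: w') y).+1 <= occ (c :: w') (x ++ c :: y).
Proof.
move=> Hy; elim: x => [|a x IH] /=.
- by rewrite occ_cons /= Hy eqxx.
- rewrite occ_cons. exact: leq_trans IH (leq_addl _ _).
Qed.

Fixpoint Ge {A : Type} (c : A) (w' : seq A) (t : nat) : gre A :=
  match t with
  | 0 => All
  | t'.+1 => GConc All (GConc (GLet c) (Inter (GConc (word w') All) (Ge c w' t')))
  end.

Lemma lang_Ge (A : eqType) (c : A) w' t v : lang (Ge c w' t) v <-> t <= occ (c :: w') v.
Proof.
elim: t v => [|t IH] v; first by split=> // _ [].
split.
- move=> [x [y1 [-> [_ [x2 [y [-> [-> HI]]]]]]]].
  have [/lang_pre Hp /IH Ht] := proj1 (@lang_Inter _ (GConc (word w') All) (Ge c w' t) y) HI.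
  have := @occ_ge_cat A c w' x y Hp. move=> H; apply: leq_trans H; by [].
- move/ge_split => [x [y [-> [Hp Ht]]]].
  exists x, (c :: y); split=> //; split; first by move=> [].
  exists [:: c], y; split=> //; split=> //; apply/lang_Inter; split; [exact/lang_pre | exact/IH].
Qed.

Definition CE {A : Type} (c : A) w' k := Inter (Ge c w' k) (GCompl (Ge c w' k.+1)).

Lemma lang_CE (A : eqType) (c : A) w' k v : lang (CE c w' k) v <-> occ (c :: w') v = k.
Proof.
have G1 := @lang_Ge A c w' k v. have G2 := @lang_Ge A c w' k.+1 v.
split.
- move=> HI; have [/G1 H1 H2] := proj1 (@lang_Inter _ (Ge c w' k) (GCompl (Ge c w' k.+1)) v) HI.
  apply/eqP; rewrite eqn_leq H1 andbT.
  rewrite leqNgt; apply/negP => H; apply: H2; exact/G2.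
- move=> H; apply/lang_Inter; split; first by apply/G1; rewrite H.
  move=> /G2; by rewrite H ltnn.
Qed.

Lemma height_word A (s : seq A) : height (word s) = 0.
Proof. elim: s => [|a s IH] //=; by rewrite IH. Qed.

Lemma height_Ge A (c : A) w' t : height (Ge c w' t) = 0.
Proof. elim: t => [|t IH] //=; by rewrite IH height_word. Qed.

Lemma height_CE A (c : A) w' k : height (CE c w' k) = 0.
Proof. change (maxn (height (Ge c w' k)) (height (Ge c w' k.+1)) = 0); by rewrite !height_Ge. Qed.

Lemma take_pre (A : Type) (w' x y : seq A) c : size w' <= 1 ->
  take (size w') ((x ++ [:: c]) ++ y) = take (size w') (x ++ [:: c]).
Proof. move=> Hs; rewrite takel_cat // size_cat /=; lia. Qed.

Lemma occ_cat_c (A : eqType) (c : A) w' x y : size w' <= 1 -> take (size w') y = w' ->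
  occ (c :: w') (x ++ c :: y) = occ (c :: w') (x ++ [:: c]) + occ (c :: w') y + size w'.
Proof.
move=> Hs Hy; elim: x => [|a x IH].
- rewrite /= !occ_cons occ_nil /= Hy eqxx.
  case: w' Hs Hy => [|d [|? ?]] //= _ _; rewrite ?eqxx ?eqseq_cons ?andbF /= ?addn0 ?add0n // addnC //.
- rewrite /= !occ_cons IH.
  have -> : take (size (c :: w')) (a :: x ++ c :: y) = take (size (c :: w')) (a :: x ++ [:: c]).
    rewrite /= -cat_rcons -cats1 take_pre //.
  lia.
Qed.

Lemma L1_split (A : eqType) (c : A) w' v t : size w' <= 1 -> occ (c :: w') v = t.+1 ->
  exists x y, v = (x ++ [:: c]) ++ y /\ occ (c :: w') (x ++ [:: c]) = 1 - size w' /\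
    take (size w') y = w' /\ occ (c :: w') y = t.
Proof.
move=> Hs; elim: v t => [|a v IH] t; first by rewrite occ_nil.
rewrite occ_cons; case: (take (size (c :: w')) (a :: v) =P c :: w') => [H|H] Ht.
- move: H => /= [Ea Hv]. subst a. exists [::], v; split=> //; split; last by split=> //; move: Ht => /=; lia.
  rewrite /= occ_cons occ_nil /=.
  clear -Hs Hv; case: w' Hs Hv => [|d [|? ?]] //= _ _; rewrite ?eqxx ?eqseq_cons ?andbF /=; by [].
- have [x [y [Ev [Hx [Hy Hty]]]]] := IH _ Ht. subst v.
  exists (a :: x), y; split=> //; split=> //.
  rewrite cat_cons occ_cons Hx.
  have -> : (take (size (c :: w')) (a :: x ++ [:: c]) == c :: w') = false.
    apply/negbTE/eqP => E; apply: H. move: E => /= [Ea Et]. by rewrite take_pre // Ea Et.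
  by [].
Qed.

Lemma L1_join (A : eqType) (c : A) w' x y : size w' <= 1 -> take (size w') y = w' ->
  occ (c :: w') (x ++ [:: c]) = 1 - size w' ->
  occ (c :: w') ((x ++ [:: c]) ++ y) = (occ (c :: w') y).+1.
Proof.
move=> Hs Hy Hx; rewrite -catA /= occ_cat_c // Hx; lia.
Qed.

Definition X0e {A : Type} (c : A) w' := Inter (CE c w' (1 - size w')) (GConc All (GLet c)).
Definition Xe {A : Type} (c : A) w' := Inter (X0e c w') (GConc (word w') All).
Definition Ze {A : Type} (c : A) w' := Inter (CE c w' 0) (GConc (word w') All).

Lemma lang_X0 (A : eqType) (c : A) w' x :
  lang (X0e c w') x <-> occ (c :: w') x = 1 - size w' /\ exists x', x = x' ++ [:: c].
Proof.
split.
- move=> H; have [/lang_CE H1 /lang_endc H2] := proj1 (lang_Inter _ _ x) H. by split.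
- move=> [H1 H2]; apply/lang_Inter; split; [exact/lang_CE | exact/lang_endc].
Qed.

Lemma lang_X (A : eqType) (c : A) w' x :
  lang (Xe c w') x <-> (occ (c :: w') x = 1 - size w' /\ exists x', x = x' ++ [:: c])
     /\ take (size w') x = w'.
Proof.
split.
- move=> H; have [/lang_X0 H1 /lang_pre H2] := proj1 (lang_Inter _ _ x) H. by split.
- move=> [H1 H2]; apply/lang_Inter; split; [exact/lang_X0 | exact/lang_pre].
Qed.

Lemma lang_Z (A : eqType) (c : A) w' x :
  lang (Ze c w') x <-> occ (c :: w') x = 0 /\ take (size w') x = w'.
Proof.
split.
- move=> H; have [/lang_CE H1 /lang_pre H2] := proj1 (lang_Inter _ _ x) H. by split.
- move=> [H1 H2]; apply/lang_Inter; split; [exact/lang_CE | exact/lang_pre].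
Qed.

Lemma blocks (A : eqType) (c : A) w' t y : size w' <= 1 ->
  (lang (cpowE (Xe c w') t (Ze c w')) y <-> take (size w') y = w' /\ occ (c :: w') y = t).
Proof.
move=> Hs; elim: t y => [|t IH] y.
- split; [by move/lang_Z => [? ?] | by move=> [? ?]; apply/lang_Z].
- split.
  + move=> [x [y' [-> [/lang_X [[Hx [x' Ex]] Hp] /IH [Hp' Ht]]]]]. subst x.
    split; first by rewrite (@take_pre _ w' x' y' c Hs).
    by rewrite L1_join // Ht.
  + move=> [Hp Ht]. have [x [y' [E [Hx [Hy' Hty']]]]] := L1_split Hs Ht.
    exists (x ++ [:: c]), y'; split=> //; split.
    * apply/lang_X; split; first by split=> //; exists x.
      by rewrite -(@take_pre _ w' x y' c Hs) -E.
    * by apply/IH.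
Qed.

Lemma main_count (A : eqType) (c : A) w' t v : size w' <= 1 ->
  (lang (GConc (X0e c w') (cpowE (Xe c w') t (Ze c w'))) v <-> occ (c :: w') v = t.+1).
Proof.
move=> Hs; split.
- move=> [x [y [-> [/lang_X0 [Hx [x' Ex]] /(blocks _ _ _ Hs) [Hp Ht]]]]]. subst x.
  by rewrite L1_join // Ht.
- move=> Ht. have [x [y' [E [Hx [Hy' Hty']]]]] := L1_split Hs Ht.
  exists (x ++ [:: c]), y'; split=> //; split.
  + apply/lang_X0; split=> //; by exists x.
  + exact/(blocks _ _ _ Hs).
Qed.

Lemma height_cpow A (X F : gre A) t : height X = 0 -> height (cpowE X t F) = height F.
Proof. move=> H; elim: t => [|t IH] //=. by rewrite H IH max0n. Qed.

Lemma height_X0 A (c : A) w' : height (X0e c w') = 0.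
Proof. change (maxn (height (CE c w' (1 - size w'))) (maxn 0 0) = 0). by rewrite height_CE. Qed.
Lemma height_X A (c : A) w' : height (Xe c w') = 0.
Proof. change (maxn (height (X0e c w')) (maxn (height (word w')) 0) = 0). by rewrite height_X0 height_word. Qed.
Lemma height_Z A (c : A) w' : height (Ze c w') = 0.
Proof. change (maxn (height (CE c w' 0)) (maxn (height (word w')) 0) = 0). by rewrite height_CE height_word. Qed.

Lemma arith n k s : 2 <= n -> k < n ->
  (s = k %[mod n]) <-> (k == 0) && (s == 0) \/
     exists m, s = ((if k == 0 then n.-1 else k.-1) + n * m).+1.
Proof.
move=> Hn Hk; rewrite (modn_small Hk). split.
- case: s => [|s] Hs.
  + left. rewrite mod0n in Hs. by rewrite -Hs.
  + right. have := divn_eq s.+1 n. rewrite Hs.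
    case: ifP => /eqP Hk0.
    * subst k. case: (s.+1 %/ n) => [|q] E; first by move: E; lia.
      exists q. nia.
    * move=> E. exists (s.+1 %/ n). nia.
- move=> [/andP [/eqP -> /eqP ->] | [m ->]]; first by rewrite mod0n.
  case: ifP => /eqP Hk0.
  + subst k. have -> : (n.-1 + n * m).+1 = n * m.+1 by nia.
    by rewrite modnMr.
  + have -> : (k.-1 + n * m).+1 = m * n + k by nia.
    by rewrite modnMDl modn_small.
Qed.

Theorem proposition2p4 (A : finType) (w : seq A) :
  0 < size w <= 2 ->
  (forall k : nat, star_height_eq0 (Count w k)) /\
  (forall n k : nat, 2 <= n -> k < n -> star_height_le (ModCount w k n) 1).
Proof.
case: w => [|c w'] //= Hw.
have Hs : size w' <= 1 by move: Hw; lia.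
split.
- move=> k; exists (CE c w' k); split; [move=> v; exact: lang_CE | exact: height_CE].
- move=> n k Hn Hk.
  pose r := if k == 0 then n.-1 else k.-1.
  pose S := GConc (GStar (powE (Xe c w') n)) (Ze c w').
  have HS : forall y, lang S y <-> exists m, lang (cpowE (Xe c w') (n * m) (Ze c w')) y.
    move=> y; split.
    + move=> /star_conc [m /pow_lemma Hm]; by exists m.
    + move=> [m /pow_lemma Hm]; apply/star_conc; by exists m.
  pose M := GConc (X0e c w') (cpowE (Xe c w') r S).
  have HM : forall v, lang M v <-> exists m, occ (c :: w') v = (r + n * m).+1.
    move=> v; split.
    + move=> [x [y [-> [Hx /(@cpow_exists _ (Xe c w') S _ r HS) [m Hm]]]]].
      exists m; apply/(main_count _ _ _ Hs). exists x, y; split=> //; split=> //.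
      by rewrite cpow_add in Hm.
    + move=> [m /(main_count _ _ _ Hs) [x [y [-> [Hx Hy]]]]].
      exists x, y; split=> //; split=> //.
      apply/(@cpow_exists _ (Xe c w') S _ r HS); exists m. by rewrite cpow_add.
  exists (GUnion (if k == 0 then CE c w' 0 else GEmpty) M); split.
  + move=> v. rewrite /ModCount. apply: iff_trans (iff_sym (arith _ Hn Hk)).
    split.
    * move=> [HU | /HM HMv]; last by right.
      left. move: HU; case: ifP => // /eqP Ek /(@lang_CE _ c w' 0 v) Hv. by rewrite Hv.
    * move=> [/andP [/eqP Ek /eqP Ev] | HMv]; last by right; apply/HM.
      left. rewrite Ek /=. exact/(@lang_CE _ c w' 0 v).
  + have HSh : height S = 1.
      rewrite /S. change (maxn (height (cpowE (Xe c w') n GEps)).+1 (height (Ze c w')) = 1).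
      by rewrite height_cpow ?height_X // height_Z.
    have HMh : height M = 1.
      rewrite /M. change (maxn (height (X0e c w')) (height (cpowE (Xe c w') r S)) = 1).
      by rewrite height_cpow ?height_X // HSh height_X0.
    change (maxn (height (if k == 0 then CE c w' 0 else GEmpty)) (height M) <= 1).
    by rewrite HMh; case: (k == 0); rewrite ?height_CE.
Qed.
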